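(* Let $K$ be a field of any characteristic and let $I_A\subset K[x_1,\ldots,x_n]$ be a toric ideal of height $2$. Then $I_A$ is radical splittable if and only if $I_A$ is a set-theoretic complete intersection on binomials.
   Context: $A=\{{\bf a}_1,\ldots,{\bf a}_n\}\subset\mathbb{Z}^m$ with $\ker_{\mathbb{Z}}(A)\cap\mathbb{N}^n=\{{\bf 0}\}$; $I_A$ is the kernel of $K[x_1,\ldots,x_n]\to K[t_1^{\pm1},\ldots,t_m^{\pm1}]$, $x_i\mapsto{\bf t}^{{\bf a}_i}$. $\mathrm{bar}(I_A)$ is the smallest $t$ such that there exist binomials $B_1,\ldots,B_t\in I_A$ with $I_A=\mathrm{rad}(B_1,\ldots,B_t)$; $I_A$ is a set-theoretic complete intersection on binomials if $\mathrm{bar}(I_A)=\mathrm{ht}(I_A)$. $I_A$ is radical splittable if there exist toric ideals $I_{A_1},I_{A_2}\subset K[x_1,\ldots,x_n]$ with $I_A=\mathrm{rad}(I_{A_1}+I_{A_2})$ and $I_{A_i}\ne I_A$ for $i=1,2$. *)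

(* Defs.v *)
From HB Require Import structures.
From mathcomp Require Import all_boot all_order all_algebra.
From mathcomp Require Export mpoly.
Set Implicit Arguments. Unset Strict Implicit. Unset Printing Implicit Defensive.
Import Order.TTheory GRing.Theory Num.Theory.
Local Open Scope ring_scope.

Section Toric.
Variables (K : fieldType) (n : nat).
Notation P := {mpoly K[n]}.

Definition pset := P -> Prop.
Definition pset_eq (I J : pset) := forall f, I f <-> J f.
Definition psubset (I J : pset) := forall f, I f -> J f.

(* A configuration A = {a_1,...,a_n} in Z^m : a_i j = j-th coordinate of a_i. *)
Definition Aimg (m : nat) (A : 'I_n -> 'I_m -> int) (u : 'X_{1..n}) : 'rV[int]_m :=
  \row_j \sum_(i < n) ((u i)%:Z * A i j).

Definition positive_conf (m : nat) (A : 'I_n -> 'I_m -> int) :=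
  forall u : 'X_{1..n}, Aimg A u = 0 -> u = 0%MM.

(* I_A = kernel of K[x] -> K[t^{±1}] = K[Z^m], x_i |-> t^{a_i}: the image of
   f = sum_u c_u x^u is sum_u c_u t^{Au}, whose coefficient at t^w is
   sum_{u : Au = w} c_u. *)
Definition toric (m : nat) (A : 'I_n -> 'I_m -> int) : pset :=
  fun f => forall w : 'rV[int]_m,
    \sum_(u <- msupp f | Aimg A u == w) f@_u = 0.

Definition is_ideal (I : pset) :=
  I 0 /\ (forall f g, I f -> I g -> I (f + g)) /\ (forall r f, I f -> I (r * f)).

Definition is_prime_ideal (I : pset) :=
  is_ideal I /\ ~ I 1 /\ (forall f g, I (f * g) -> I f \/ I g).

Definition prime_chain_to (Q : pset) (h : nat) :=
  exists c : nat -> pset,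
    (forall i, (i <= h)%N -> is_prime_ideal (c i)) /\
    (forall i, (i < h)%N -> psubset (c i) (c i.+1) /\ ~ psubset (c i.+1) (c i)) /\
    pset_eq (c h) Q.

(* ht(I) = min { ht(Q) : Q prime, I ⊆ Q }, ht(Q) = sup of lengths of prime chains *)
Definition height (I : pset) (h : nat) :=
  (exists Q, is_prime_ideal Q /\ psubset I Q /\ ~ prime_chain_to Q h.+1) /\
  (forall Q, is_prime_ideal Q -> psubset I Q -> prime_chain_to Q h).

Definition radical (I : pset) : pset := fun f => exists k : nat, I (f ^+ k).

Definition gen_ideal (t : nat) (B : 'I_t -> P) : pset :=
  fun f => exists r : 'I_t -> P, f = \sum_(i < t) r i * B i.

Definition sum_ideal (I J : pset) : pset :=
  fun f => exists g h, I g /\ J h /\ f = g + h.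

Definition binomial (f : P) := exists u v : 'X_{1..n}, f = 'X_[u] - 'X_[v].

Definition bar_at (I : pset) (t : nat) :=
  exists B : 'I_t -> P, (forall i, binomial (B i) /\ I (B i)) /\
    pset_eq I (radical (gen_ideal B)).

Definition bar (I : pset) (t : nat) :=
  bar_at I t /\ forall t', (t' < t)%N -> ~ bar_at I t'.

Definition stci_binomials (I : pset) :=
  exists h, height I h /\ bar I h.

Definition radical_splittable (m : nat) (A : 'I_n -> 'I_m -> int) :=
  exists (m1 m2 : nat) (A1 : 'I_n -> 'I_m1 -> int) (A2 : 'I_n -> 'I_m2 -> int),
    positive_conf A1 /\ positive_conf A2 /\
    pset_eq (toric A) (radical (sum_ideal (toric A1) (toric A2))) /\
    ~ pset_eq (toric A1) (toric A) /\ ~ pset_eq (toric A2) (toric A).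

End Toric.

(* Main.v *)
Require Import Defs.
From mathcomp Require Import all_boot all_order all_algebra.
From mathcomp Require Import mpoly.
From mathcomp Require Import zify ring.
From Stdlib Require Import Classical.
Set Implicit Arguments. Unset Strict Implicit. Unset Printing Implicit Defensive.
Import Order.TTheory GRing.Theory Num.Theory.
Local Open Scope ring_scope.


Section Gen.
Variables (K : fieldType) (n : nat).
Notation P := {mpoly K[n]}.

Lemma filter_transfer (X T1 T2 : eqType) (s : seq X) (c : X -> K)
  (f1 : X -> T1) (f2 : X -> T2) :
  {in s &, forall x y, (f1 x == f1 y) = (f2 x == f2 y)} ->
  (forall a, \sum_(x <- s | f1 x == a) c x = 0) ->
  (forall b, \sum_(x <- s | f2 x == b) c x = 0).
Proof.
move=> H h0 b.
case: (boolP (has (fun y => f2 y == b) s)) => [/hasP [y ys /eqP <-]|hn].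
  rewrite -[RHS](h0 (f1 y)) big_seq_cond [RHS]big_seq_cond; apply: eq_bigl => x.
  by case: (boolP (x \in s)) => //= xs; rewrite H.
rewrite big_seq_cond big_pred0 // => x.
apply/negbTE; apply/andP => -[xs e]; move/hasPn: hn => /(_ x xs); by rewrite e.
Qed.

Lemma mcoeff_sumX (X : eqType) (s : seq X) (c : X -> K) (phi : X -> 'X_{1..n}) e :
  (\sum_(x <- s) c x *: 'X_[phi x] : P)@_e = \sum_(x <- s | phi x == e) c x.
Proof.
rewrite raddf_sum [RHS]big_mkcond /=; apply: eq_bigr => x _.
by rewrite mcoeffZ mcoeffX; case: eqP; rewrite ?mulr1 ?mulr0.
Qed.

Lemma sumX_eq0 (X : eqType) (s : seq X) (c : X -> K) (phi : X -> 'X_{1..n}) :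
  (\sum_(x <- s) c x *: 'X_[phi x] : P) = 0 <->
  forall e, \sum_(x <- s | phi x == e) c x = 0.
Proof.
split=> [h e|h]; first by rewrite -mcoeff_sumX h mcoeff0.
by apply/mpolyP => e; rewrite mcoeff_sumX h mcoeff0.
Qed.

End Gen.

Definition ppz (z : int) : nat := if (0 <= z)%R then `|z|%N else 0%N.
Definition npz (z : int) : nat := if (z < 0)%R then `|z|%N else 0%N.
Lemma ppz_npz z : (ppz z)%:Z - (npz z)%:Z = z.
Proof. rewrite /ppz /npz; case: z => k /=; lia. Qed.

Notation tf := (@FracField.tofrac _).

Lemma mpolyX_neq0 (R : fieldType) k (u : 'X_{1..k}) : ('X_[u] : {mpoly R[k]}) != 0.
Proof.
apply/eqP => /(congr1 (mcoeff u)); rewrite mcoeffX eqxx mcoeff0 => /eqP.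
by rewrite oner_eq0.
Qed.

Section Psi.
Variables (K : fieldType) (n m : nat) (A : 'I_n -> 'I_m -> int).
Notation P := {mpoly K[n]}.
Let F := {fraction {mpoly K[m]}}.
Definition cf : {rmorphism K -> F} := (tf \o @mpolyC m K).
Definition Pm (i : 'I_n) : 'X_{1..m} := [multinom ppz (A i j) | j < m].
Definition Nm (i : 'I_n) : 'X_{1..m} := [multinom npz (A i j) | j < m].
Definition Pu (u : 'X_{1..n}) := (\sum_(i < n) Pm i *+ u i)%MM.
Definition Nu (u : 'X_{1..n}) := (\sum_(i < n) Nm i *+ u i)%MM.
Definition hh (i : 'I_n) : F := (tf 'X_[Pm i]) / (tf 'X_[Nm i]).
Definition psi (f : P) : F := mmap cf hh f.

Lemma PuNu u j : (Pu u j)%:Z - (Nu u j)%:Z = Aimg A u 0 j.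
Proof.
rewrite /Pu /Nu !mnm_sumE mxE -!natz !natr_sum -sumrB; apply: eq_bigr => i _.
by rewrite !mulmnE !mnmE !natz !PoszM -mulrBl ppz_npz mulrC.
Qed.

Lemma psiX u : psi 'X_[u] = tf 'X_[Pu u] / tf 'X_[Nu u].
Proof.
rewrite /psi mmapX /mmap1 /Pu /Nu -!mprodXnE !rmorph_prod -prodfV -big_split.
by apply: eq_bigr => i _; rewrite /hh exprMn exprVn !rmorphXn.
Qed.

Lemma psiE f : psi f = \sum_(u <- msupp f) cf f@_u * psi 'X_[u].
Proof. by rewrite {1}/psi /mmap; apply: eq_bigr => u _; rewrite /psi mmapX. Qed.

Lemma psi_is_rmorph : multiplicative psi.
Proof. exact: mmap_is_multiplicative. Qed.

Lemma psiM f g : psi (f * g) = psi f * psi g.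
Proof. by rewrite /psi rmorphM. Qed.
Lemma psiD f g : psi (f + g) = psi f + psi g.
Proof. by rewrite /psi rmorphD. Qed.
Lemma psiB f g : psi (f - g) = psi f - psi g.
Proof. by rewrite /psi rmorphB. Qed.
Lemma psi1 : psi 1 = 1.
Proof. by rewrite /psi rmorph1. Qed.
Lemma psi0' : psi 0 = 0.
Proof. by rewrite /psi rmorph0. Qed.

Lemma psi_toric f : psi f = 0 <-> toric A f.
Proof.
set s := msupp f.
pose D := (\sum_(u <- s) Nu u)%MM.
have Hle u : u \in s -> (Nu u <= D)%MM.
  move=> us; apply/mnm_lepP => j; rewrite /D (big_rem u us) /= mnmDE; exact: leq_addr.
have L u j : u \in s -> (Nu u j <= D j)%N.
  by move=> us; move/mnm_lepP: (Hle u us); apply.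
pose e u := (Pu u + (D - Nu u))%MM.
have He u u' : u \in s -> u' \in s -> (e u == e u') = (Aimg A u == Aimg A u').
  move=> us us'; apply/eqP/eqP => [E|E].
    apply/rowP => j; rewrite -!PuNu.
    have := congr1 (fun x : 'X_{1..m} => (x j)%:Z) E; rewrite /e /= !mnmDE !mnmBE.
    move: (L u j us) (L u' j us'); lia.
  apply/mnmP => j; rewrite /e !mnmDE !mnmBE.
  have := congr1 (fun x : 'rV[int]_m => x 0 j) E; rewrite /= -!PuNu.
  move: (L u j us) (L u' j us'); lia.
have C1 : psi f * tf 'X_[D] = tf (\sum_(u <- s) f@_u *: 'X_[e u]).
  rewrite psiE mulr_suml rmorph_sum; apply: eq_big_seq => u us.
  have -> : D = (Nu u + (D - Nu u))%MM by rewrite addmC submK // Hle.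
  rewrite psiX /e !mpolyXD -mul_mpolyC !rmorphM /=.
  have nz : tf ('X_[Nu u] : {mpoly K[m]}) != 0 by rewrite tofrac_eq0 mpolyX_neq0.
  set a := tf _; set b := tf _; set d := tf _.
  by rewrite /= !mulrA mulfVK.
have nzD : tf ('X_[D] : {mpoly K[m]}) != 0 by rewrite tofrac_eq0 mpolyX_neq0.
split=> [h|h].
  have : tf (\sum_(u <- s) f@_u *: 'X_[e u]) = 0 by rewrite -C1 h mul0r.
  move/eqP; rewrite tofrac_eq0 => /eqP /sumX_eq0 h2.
  apply: (filter_transfer _ h2) => x y xs ys; exact: He.
have : (\sum_(u <- s) f@_u *: 'X_[e u] : {mpoly K[m]}) = 0.
  apply/sumX_eq0; apply: (filter_transfer _ h) => x y xs ys; by rewrite He.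
move/(congr1 tf); rewrite -C1 rmorph0 => /eqP; rewrite mulf_eq0 (negbTE nzD) orbF.
by move/eqP.
Qed.


Notation TA := (@toric K n m A).
Lemma toric_ideal : is_ideal TA.
Proof.
split; first by apply/psi_toric; rewrite psi0'.
split=> [f g /psi_toric hf /psi_toric hg|r f /psi_toric hf]; apply/psi_toric.
  by rewrite psiD hf hg addr0.
by rewrite psiM hf mulr0.
Qed.

Lemma toric_prime : is_prime_ideal TA.
Proof.
split; first exact: toric_ideal.
split; first by move/psi_toric; rewrite psi1 => /eqP; rewrite oner_eq0.
move=> f g /psi_toric; rewrite psiM => /eqP; rewrite mulf_eq0 => /orP [] /eqP h.
  by left; apply/psi_toric.
by right; apply/psi_toric.
Qed.

Lemma toric_bin a b : TA ('X_[a] - 'X_[b]) <-> Aimg A a = Aimg A b.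
Proof.
rewrite -psi_toric psiB !psiX.
have nz u : tf ('X_[u] : {mpoly K[m]}) != 0 by rewrite tofrac_eq0 mpolyX_neq0.
split=> [/eqP|E].
  rewrite subr_eq0 eqr_div // -!rmorphM tofrac_eq -!mpolyXD => /eqP E.
  have E2 : (Pu a + Nu b)%MM = (Pu b + Nu a)%MM.
    apply/eqP; move/eqP: E; apply: contraLR => ne; apply/eqP.
    move/(congr1 (mcoeff (Pu a + Nu b)%MM)); rewrite !mcoeffX eqxx eq_sym (negbTE ne).
    by move/eqP; rewrite oner_eq0.
  apply/rowP => j; rewrite -!PuNu.
  have := congr1 (fun x : 'X_{1..m} => (x j)%:Z) E2; rewrite /= !mnmDE; lia.
apply/eqP; rewrite subr_eq0 eqr_div // -!rmorphM tofrac_eq -!mpolyXD.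
apply/eqP; congr mpolyX; apply/mnmP => j; rewrite !mnmDE.
have := congr1 (fun x : 'rV[int]_m => x 0 j) E; rewrite /= -!PuNu; lia.
Qed.


Lemma ideal_sum (J : pset K n) (X : Type) (s : seq X) (p : pred X) (G : X -> P) :
  is_ideal J -> (forall x, p x -> J (G x)) -> J (\sum_(x <- s | p x) G x).
Proof.
move=> [J0 [JD _]] H; elim: s => [|x s ih]; first by rewrite big_nil.
rewrite big_cons; case: ifP => // px; exact: JD (H x px) ih.
Qed.

Lemma toric_span f : TA f ->
  forall J : pset K n, is_ideal J ->
    (forall a b, Aimg A a = Aimg A b -> J ('X_[a] - 'X_[b])) -> J f.
Proof.
move=> hf J HJ Hb.
set s := msupp f.
pose l (w : 'rV[int]_m) := [seq x <- s | Aimg A x == w].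
pose r u := nth u (l (Aimg A u)) 0.
have Hr u : u \in s -> (r u \in s) && (Aimg A (r u) == Aimg A u).
  move=> us; have : u \in l (Aimg A u) by rewrite mem_filter eqxx us.
  rewrite /r; case E: (l (Aimg A u)) => [|y l'] //= _.
  have : y \in l (Aimg A u) by rewrite E in_cons eqxx.
  by rewrite mem_filter andbC.
have Hr2 u u' : u \in s -> u' \in s -> Aimg A u = Aimg A u' -> r u = r u'.
  move=> us us' E; rewrite /r E.
  have : u' \in l (Aimg A u') by rewrite mem_filter eqxx us'.
  by case: (l (Aimg A u')).
have H0 : (\sum_(u <- s) f@_u *: 'X_[r u] : P) = 0.
  apply/sumX_eq0; apply: (filter_transfer (f1 := Aimg A)) => [x y xs ys|]; last first.
    by move=> a; apply: hf.
  apply/eqP/eqP => [E|E]; first exact: Hr2.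
  move/andP: (Hr x xs) => [_ /eqP <-]; move/andP: (Hr y ys) => [_ /eqP <-].
  by rewrite E.
have -> : f = \sum_(u <- s) f@_u *: ('X_[u] - 'X_[r u]).
  have -> : \sum_(u <- s) f@_u *: ('X_[u] - 'X_[r u]) =
     \sum_(u <- s) f@_u *: 'X_[u] - \sum_(u <- s) f@_u *: ('X_[r u] : P).
    by rewrite -sumrB; apply: eq_bigr => u _; rewrite scalerBr.
  by rewrite H0 subr0 -mpolyE.
rewrite big_seq; apply: ideal_sum => // x xs.
case: HJ => [_ [_ HM]]; rewrite -mul_mpolyC; apply: HM; apply: Hb.
by move/andP: (Hr x xs) => [_ /eqP ->].
Qed.

End Psi.


Section Vec.
Variables (n m : nat) (A : 'I_n -> 'I_m -> int).

Definition kerv (v : 'I_n -> int) := forall j, \sum_(i < n) v i * A i j = 0.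
Definition dv (a b : 'X_{1..n}) : 'I_n -> int := fun i => (a i)%:Z - (b i)%:Z.
Definition posm (v : 'I_n -> int) : 'X_{1..n} := [multinom ppz (v i) | i < n].
Definition negm (v : 'I_n -> int) : 'X_{1..n} := [multinom npz (v i) | i < n].

Lemma kerv_ext v v' : (forall i, v i = v' i) -> kerv v -> kerv v'.
Proof. by move=> E h j; rewrite -[RHS](h j); apply: eq_bigr => i _; rewrite E. Qed.

Lemma kerv_lin a b v w : kerv v -> kerv w -> kerv (fun i => a * v i + b * w i).
Proof.
move=> hv hw j; rewrite (eq_bigr (fun i => a * (v i * A i j) + b * (w i * A i j))).
  by rewrite big_split /= -!mulr_sumr hv hw !mulr0 addr0.
by move=> i _; rewrite mulrDl !mulrA.
Qed.

Lemma Aimg_eq a b : Aimg A a = Aimg A b <-> kerv (dv a b).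
Proof.
split=> [E j|h].
  have := congr1 (fun x : 'rV[int]_m => x 0 j) E; rewrite /= !mxE => E2.
  rewrite (eq_bigr (fun i => (a i)%:Z * A i j - (b i)%:Z * A i j)).
    by rewrite sumrB E2 subrr.
  by move=> i _; rewrite /dv mulrBl.
apply/rowP => j; rewrite !mxE; apply/eqP; rewrite -subr_eq0 -sumrB; apply/eqP.
rewrite -[RHS](h j); apply: eq_bigr => i _; by rewrite /dv mulrBl.
Qed.

Lemma dv_posneg v i : dv (posm v) (negm v) i = v i.
Proof. by rewrite /dv !mnmE ppz_npz. Qed.

Lemma Aimg_posneg v : Aimg A (posm v) = Aimg A (negm v) <-> kerv v.
Proof.
rewrite Aimg_eq; split; apply: kerv_ext => i; by rewrite dv_posneg.
Qed.

End Vec.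

Definition bin (K : fieldType) n (v : 'I_n -> int) : {mpoly K[n]} :=
  'X_[posm v] - 'X_[negm v].

Lemma toric_binv (K : fieldType) n m (A : 'I_n -> 'I_m -> int) v :
  toric (K := K) A (bin K v) <-> kerv A v.
Proof. by rewrite toric_bin Aimg_posneg. Qed.

Section Dvd.
Variables (K : fieldType) (n : nat).
Notation P := {mpoly K[n]}.

Lemma bin_dvd_pos (g : 'I_n -> int) a b (k : nat) :
  (forall i, dv a b i = k%:Z * g i) -> exists q : P, 'X_[a] - 'X_[b] = q * bin K g.
Proof.
move=> H.
pose c := (a - posm g *+ k)%MM.
have Ha : a = (c + posm g *+ k)%MM.
  apply/mnmP => i; rewrite /c mnmDE mnmBE mulmnE mnmE.
  move: (H i); rewrite /dv /ppz; case: (g i) => z /=; nia.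
have Hb : b = (c + negm g *+ k)%MM.
  apply/mnmP => i; rewrite /c mnmDE mnmBE !mulmnE !mnmE.
  move: (H i); rewrite /dv /ppz /npz; case: (g i) => z /=; nia.
exists ('X_[c] * \sum_(i < k) 'X_[posm g] ^+ (k.-1 - i) * 'X_[negm g] ^+ i).
rewrite {1}Ha {1}Hb !mpolyXD -!mpolyXn -mulrBr subrXX /bin.
by rewrite -mulrA [_ * (_ - _)]mulrC.
Qed.

Lemma bin_dvd (g : 'I_n -> int) a b (k : int) :
  (forall i, dv a b i = k * g i) -> exists q : P, 'X_[a] - 'X_[b] = q * bin K g.
Proof.
case: k => k H; first exact: bin_dvd_pos.
have [q Hq] : exists q : P, 'X_[b] - 'X_[a] = q * bin K g.
  apply: (@bin_dvd_pos g b a k.+1) => i; move: (H i); rewrite /dv; lia.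
by exists (- q); rewrite mulNr -Hq opprB.
Qed.

End Dvd.

Section Cyc.
Variables (n m : nat) (A : 'I_n -> 'I_m -> int).

Lemma ker_cyclic (w : 'I_n -> int) i0 :
  kerv A w -> w i0 != 0 ->
  (forall v, kerv A v -> forall j, v j * w i0 = v i0 * w j) ->
  exists g, kerv A g /\ g i0 != 0 /\
    forall v, kerv A v -> exists k : int, forall i, v i = k * g i.
Proof.
move=> kw wnz Hmin.
pose Pd (d : nat) := (0 < d)%N /\ exists v, kerv A v /\ v i0 = d%:Z.
have P0 : Pd `|w i0|%N.
  split; first by rewrite absz_gt0.
  case: (ltrP 0 (w i0)) => h.
    by exists w; split => //; rewrite gtz0_abs.
  exists (fun i => (-1) * w i + 0 * w i); split; first exact: kerv_lin.
  rewrite ltz0_abs; first by ring.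
  by rewrite lt_neqAle wnz h.
have [d [[dpos [g [kg gi0]]] dmin]] :
    exists d, Pd d /\ forall d', Pd d' -> (d <= d')%N.
  suff H : forall N d, (d <= N)%N -> Pd d ->
      exists d0, Pd d0 /\ forall d', Pd d' -> (d0 <= d')%N.
    exact: (H _ _ (leqnn _) P0).
  elim=> [|N IH] d hd Pdd.
    by case: Pdd; rewrite lt0n; move: hd; rewrite leqn0 => ->.
  case: (classic (exists d', Pd d' /\ (d' < d)%N)) => [[d' [Pd' lt']]|nex].
    apply: (IH d') => //; lia.
  exists d; split => // d' Pd'; rewrite leqNgt; apply/negP => lt'.
  by apply: nex; exists d'.
exists g; split => //; split; first by rewrite gi0; lia.
move=> v kv.
set q := (v i0 %/ d%:Z)%Z; set r := (v i0 %% d%:Z)%Z.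
pose v' i := 1 * v i + (- q) * g i.
have kv' : kerv A v' by apply: kerv_lin.
have v'i0 : v' i0 = r by rewrite /v' gi0 {1}(divz_eq (v i0) d%:Z) -/q -/r; ring.
have dnz : d%:Z != 0 by lia.
have r0 : 0 <= r by apply: modz_ge0.
have rlt : r < d%:Z by apply: ltz_pmod; lia.
have rz : r = 0.
  case: (eqVneq r 0) => // rnz; exfalso.
  have : Pd `|r|%N.
    split; first by rewrite absz_gt0.
    by exists v'; split => //; rewrite v'i0 gez0_abs.
  move/dmin => h; move: rlt; rewrite -(gez0_abs r0); lia.
exists q => i.
have := Hmin v' kv' i; rewrite v'i0 rz mul0r => /eqP; rewrite mulf_eq0 (negbTE wnz) orbF.
rewrite /v' => /eqP; lia.
Qed.

End Cyc.

Section Eval.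
Variables (K : fieldType) (n : nat).
Notation P := {mpoly K[n]}.

Lemma eval_bin (lam : 'I_n -> nat) (a b u v : 'X_{1..n}) k (r : P) :
  ('X_[a] - 'X_[b]) ^+ k = r * ('X_[u] - 'X_[v]) ->
  (\sum_i lam i * u i = \sum_i lam i * v i)%N ->
  (\sum_i lam i * a i = \sum_i lam i * b i)%N.
Proof.
pose ev (p : P) : {poly K} := mmap (@polyC K) (fun i => 'X^(lam i)) p.
have evX x : ev 'X_[x] = 'X^(\sum_i lam i * x i).
  rewrite /ev mmapX /mmap1 -prodrXr; apply: eq_bigr => i _; by rewrite exprM.
move=> E Huv; move/(congr1 ev): E.
rewrite /ev !rmorphXn !rmorphM !rmorphB /= -/(ev _) -/(ev _) -/(ev _) -/(ev _) -/(ev _) !evX Huv.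

rewrite subrr mulr0 => /eqP; rewrite expf_eq0 => /andP [_]; rewrite subr_eq0 => /eqP E.
have := congr1 (fun p : {poly K} => p`_(\sum_i lam i * a i)) E.
rewrite /= !coefXn eqxx; case: eqP => // _ /eqP; by rewrite oner_eq0.
Qed.

End Eval.

Section Minors.
Variable n : nat.

Lemma sum_ind (i : 'I_n) (a : nat) (x : 'I_n -> int) :
  \sum_(l < n) (((l == i) * a)%N%:Z * x l) = a%:Z * x i.
Proof.
rewrite (bigD1 i) //= eqxx mul1n big1 ?addr0 // => l /negbTE ->; by rewrite mul0n mul0r.
Qed.

Definition lam2 (i j : 'I_n) (a b : nat) (l : 'I_n) := ((l == i) * a + (l == j) * b)%N.

Lemma sum_lam2 i j a b (x : 'I_n -> int) :
  \sum_(l < n) ((lam2 i j a b l)%:Z * x l) = a%:Z * x i + b%:Z * x j.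
Proof.
rewrite -!sum_ind -big_split; apply: eq_bigr => l _; by rewrite /lam2 PoszD mulrDl.
Qed.

Lemma minors_of_lam (w v : 'I_n -> int) i0 :
  0 < w i0 -> (exists k, w k < 0) ->
  (forall lam : 'I_n -> nat, \sum_i (lam i)%:Z * w i = 0 -> \sum_i (lam i)%:Z * v i = 0) ->
  forall j, v j * w i0 = v i0 * w j.
Proof.
move=> wi0 [k wk] H.
have Hp i j : 0 < w i -> w j < 0 -> v i * w j = v j * w i.
  move=> wi wj.
  have := H (lam2 i j `|w j|%N `|w i|%N); rewrite !sum_lam2 (gtz0_abs wi) (ltz0_abs wj).
  move=> h; have e : - w j * v i + w i * v j = 0 by apply: h; ring.
  apply/eqP; rewrite -subr_eq0; apply/eqP; rewrite -oppr0 -e; ring.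
have H0 i : w i = 0 -> v i = 0.
  move=> wi; move: (H (lam2 i i 1 0)); rewrite !sum_lam2 wi; lia.
move=> j; case: (ltrgtP (w j) 0) => wj.
- by rewrite (Hp i0 j wi0 wj).
- have h1 := Hp j k wj wk; have h2 := Hp i0 k wi0 wk.
  have wknz : w k != 0 by rewrite lt_eqF.
  apply: (mulIf wknz); rewrite -mulrA [w i0 * w k]mulrC mulrA h1.
  transitivity (v i0 * w k * w j); first by rewrite h2; ring.
  ring.
- by rewrite (H0 j wj) wj; ring.
Qed.

End Minors.


Section Chains.
Variables (K : fieldType) (n : nat).
Notation P := {mpoly K[n]}.
Notation pset := (pset K n).

Lemma chain_trunc (Q : pset) k j : prime_chain_to Q k -> (j <= k)%N -> prime_chain_to Q j.
Proof.
move=> [c [Hp [Hs He]]] jk; exists (fun i => c (i + (k - j))%N); split; [|split].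
- move=> i ij; apply: Hp; lia.
- move=> i ij; rewrite addSn; apply: Hs; lia.
- by rewrite subnKC.
Qed.

Lemma chain_extend (I Q : pset) k : prime_chain_to I k -> is_prime_ideal Q ->
  psubset I Q -> prime_chain_to Q k.
Proof.
move=> [c [Hp [Hs He]]] pQ IQ.
case: (classic (psubset Q I)) => QI.
  exists c; split => //; split => // f; split => [/He /IQ //|/QI /He //].
exists (fun i => if (i < k)%N then c i.+1 else Q); split; [|split].
- by move=> i ik; case: ifP => // ik'; apply: Hp.
- move=> i ik; rewrite ik; case: ifP => ik'.
    by apply: Hs.
  have ek : i.+1 = k by lia.
  rewrite ek; split; first by move=> f /He /IQ.
  by move=> h; apply: QI => f /h /He.
- by rewrite ltnn.
Qed.

Lemma height_uniq (I : pset) h : height I 2 -> height I h -> h = 2%N.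
Proof.
move=> [[Q2 [pQ2 [IQ2 nQ2]]] all2] [[Qh [pQh [IQh nQh]]] allh].
case: (ltngtP h 2) => // hlt.
  by exfalso; apply: nQh; apply: (chain_trunc (all2 _ pQh IQh)).
by exfalso; apply: nQ2; apply: (chain_trunc (allh _ pQ2 IQ2)).
Qed.

Lemma prime_pow (I : pset) f k : is_prime_ideal I -> I (f ^+ k) -> I f.
Proof.
move=> [HI [n1 Hm]]; elim: k => [|k IH]; first by rewrite expr0.
by rewrite exprS => /Hm [].
Qed.

Lemma rad_prime (I : pset) : is_prime_ideal I -> pset_eq (radical I) I.
Proof.
move=> pI f; split; first by move=> [k]; apply: prime_pow.
by move=> h; exists 1%N; rewrite expr1.
Qed.

Lemma zero_ideal : is_ideal (fun f : P => f = 0).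
Proof. by split => //; split => [f g -> ->|r f ->]; rewrite ?addr0 ?mulr0. Qed.

Lemma zero_prime : is_prime_ideal (fun f : P => f = 0).
Proof.
split; first exact: zero_ideal.
split; first by move/eqP; rewrite oner_eq0.
by move=> f g /eqP; rewrite mulf_eq0 => /orP [] /eqP; [left|right].
Qed.

Lemma no_chain2_zero (I : pset) : pset_eq I (fun f => f = 0) -> ~ prime_chain_to I 2.
Proof.
move=> HI [c [Hp [Hs He]]].
have [s12 _] := Hs 1%N isT.
have [_ nc] := Hs 0%N isT.
apply: nc => g g1.
have := s12 g g1; move/He/HI => ->; by case: (Hp 0%N isT) => [[]].
Qed.

Lemma no_chain2_principal (I : pset) (p : P) :
  pset_eq I (fun f => exists q, f = q * p) -> (1 < msize p)%N -> ~ prime_chain_to I 2.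
Proof.
move=> HI hp [c [Hp [Hs He]]].
have pnz : p != 0 by apply: contraTneq hp => ->; rewrite mmeasure0.
have [_ nc1] := Hs 0%N isT.
have [s12 _] := Hs 1%N isT.
have [_ nc2] := Hs 1%N isT.
have c12 : psubset (c 1%N) (c 2%N) by exact: s12.
have [[c10 [_ c1M]] [_ c1P]] := Hp 1%N isT.
have np : ~ c 1%N p.
  move=> c1p; apply: nc2 => f /He /HI [q ->]; exact: c1M.
have key : forall N g, (msize g <= N)%N -> c 1%N g -> g = 0.
  elim=> [|N IH] g hg g1.
    by apply/eqP; rewrite -(mmeasure_poly_eq0 mdeg) -leqn0.
  have [q gq] : exists q, g = q * p by apply/HI/He/c12.
  have q1 : c 1%N q by case: (c1P _ _ (eq_ind _ _ g1 _ gq)).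
  case: (eqVneq q 0) => [q0|qnz]; first by rewrite gq q0 mul0r.
  have : q = 0.
    apply: (IH _ _ q1); move: hg; rewrite gq msizeM //; move: (msize q) (msize p) hp => a b; case: a; lia.
  by move/eqP; rewrite (negbTE qnz).
apply: nc1 => g g1.
by rewrite (key _ g (leqnn _) g1); case: (Hp 0%N isT) => [[]].
Qed.

End Chains.


Section Mats.
Variable n : nat.

Definition Mw (w : 'I_n -> int) (i0 : 'I_n) : 'I_n -> 'I_n -> int :=
  fun i j => (i == j)%:Z * w i0 - (i == i0)%:Z * w j.

Lemma sum_sel (v : 'I_n -> int) (j : 'I_n) (c : int) :
  \sum_(i < n) v i * ((i == j)%:Z * c) = v j * c.
Proof.
rewrite (bigD1 j) //= eqxx mul1r big1 ?addr0 // => i /negbTE ->; by rewrite mul0r mulr0.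
Qed.

Lemma kerv_Mw w i0 v : kerv (Mw w i0) v <-> forall j, v j * w i0 = v i0 * w j.
Proof.
have E j : \sum_(i < n) v i * Mw w i0 i j = v j * w i0 - v i0 * w j.
  rewrite -!sum_sel -sumrB; apply: eq_bigr => i _; by rewrite /Mw mulrBr.
split=> h j.
  by apply/eqP; rewrite -subr_eq0 -E h.
by rewrite E h subrr.
Qed.

Lemma Aimg0 m (B : 'I_n -> 'I_m -> int) : Aimg B 0%MM = 0.
Proof. by apply/rowP => j; rewrite !mxE big1 // => i _; rewrite mnm0E mul0r. Qed.

Lemma Mw_pos w i0 : (exists i, 0 < w i) -> (exists j, w j < 0) -> w i0 != 0 ->
  positive_conf (Mw w i0).
Proof.
move=> [ip wip] [jn wjn] wnz u.
move=> h; have H0 : Aimg (Mw w i0) u = Aimg (Mw w i0) 0%MM by rewrite Aimg0.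
have H := proj1 (kerv_Mw _ _ _) (proj1 (Aimg_eq _ _ _) H0).
rewrite /dv in H.
have Hu j : (u j)%:Z * w i0 = (u i0)%:Z * w j.
  by move: (H j); rewrite !mnm0E; nia.
have ui0 : (u i0)%:Z = 0.
  case: (ltrgtP (w i0) 0) wnz => // wi0 _.
    move: (Hu ip); nia.
  move: (Hu jn); nia.
apply/mnmP => j; rewrite mnm0E.
move: (Hu j); rewrite ui0 mul0r => /eqP; rewrite mulf_eq0 (negbTE wnz) orbF.
move/eqP; lia.
Qed.

Lemma Mw_sub_ker m (B : 'I_n -> 'I_m -> int) w i0 :
  kerv B w -> w i0 != 0 -> forall v, kerv (Mw w i0) v -> kerv B v.
Proof.
move=> kw wnz v /kerv_Mw kv j.
apply/eqP; suff : (\sum_(i < n) v i * B i j) * w i0 == 0.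
  by rewrite mulf_eq0 (negbTE wnz) orbF.
rewrite mulr_suml (eq_bigr (fun i => v i0 * (w i * B i j))); last first.
  by move=> i _; rewrite mulrAC kv -mulrA.
by rewrite -mulr_sumr kw mulr0.
Qed.

End Mats.

Section Tor.
Variables (K : fieldType) (n : nat).
Notation P := {mpoly K[n]}.

Lemma toric_sub m1 m2 (A1 : 'I_n -> 'I_m1 -> int) (A2 : 'I_n -> 'I_m2 -> int) :
  (forall v, kerv A1 v -> kerv A2 v) -> psubset (toric (K := K) A1) (toric (K := K) A2).
Proof.
move=> H f hf; apply: (toric_span hf); first exact: toric_ideal.
move=> a b h; apply/(toric_bin K A2); apply/Aimg_eq; apply: H; exact/Aimg_eq.
Qed.

Lemma toric_zero m1 (A1 : 'I_n -> 'I_m1 -> int) :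
  (forall v, kerv A1 v -> forall i, v i = 0) ->
  pset_eq (toric (K := K) A1) (fun f => f = 0).
Proof.
move=> H f; split=> [hf|->]; last by case: (toric_ideal K A1).
apply: (toric_span hf (J := fun f => f = 0)); first exact: zero_ideal.
move=> a b /Aimg_eq /H E.
have -> : a = b by apply/mnmP => i; move: (E i); rewrite /dv; lia.
by rewrite subrr.
Qed.

Lemma principal_ideal (p : P) : is_ideal (fun f => exists q, f = q * p).
Proof.
split; first by exists 0; rewrite mul0r.
split=> [f g [q1 ->] [q2 ->]|r f [q ->]]; first by exists (q1 + q2); rewrite mulrDl.
by exists (r * q); rewrite mulrA.
Qed.

Lemma toric_principal m1 (A1 : 'I_n -> 'I_m1 -> int) g :
  kerv A1 g -> (forall v, kerv A1 v -> exists k : int, forall i, v i = k * g i) ->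
  pset_eq (toric (K := K) A1) (fun f => exists q, f = q * bin K g).
Proof.
move=> kg H f; split=> [hf|[q ->]].
  apply: (toric_span hf (J := fun f => exists q, f = q * bin K g)); first exact: principal_ideal.
  move=> a b /Aimg_eq /H [k hk]; exact: bin_dvd.
case: (toric_ideal K A1) => [_ [_ HM]]; apply: HM; exact/toric_binv.
Qed.

Lemma bin_msize (g : 'I_n -> int) i : g i != 0 -> (1 < msize (bin K g))%N.
Proof.
move=> gi.
have ne : posm g != negm g.
  apply/eqP => E; move/eqP: gi; apply; rewrite -(dv_posneg g i) /dv E; lia.
have [x [xnz xs]] : exists x, x != 0%MM /\ x \in msupp (bin K g).
  case: (eqVneq (posm g) 0%MM) => hp.
    exists (negm g); split; first by rewrite -hp eq_sym.
    rewrite mcoeff_msupp /bin mcoeffB !mcoeffX eqxx (negbTE ne) sub0r oppr_eq0.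
    exact: oner_neq0.
  exists (posm g); split => //.
  rewrite mcoeff_msupp /bin mcoeffB !mcoeffX eqxx (eq_sym (negm g)) (negbTE ne) subr0.
  exact: oner_neq0.
have := msize_mdeg_lt xs; move: xnz; rewrite -mdeg_eq0; lia.
Qed.

Lemma mixed_sign m (A : 'I_n -> 'I_m -> int) w i :
  positive_conf A -> kerv A w -> w i != 0 ->
  (exists i, 0 < w i) /\ (exists j, w j < 0).
Proof.
move=> pA kw wi.
have E : Aimg A (posm w) = Aimg A (negm w) by apply/Aimg_posneg.
split.
  apply: NNPP => hn.
  have hp : posm w = 0%MM.
    apply/mnmP => j; rewrite mnmE mnm0E /ppz.
    case: (ltrP 0 (w j)) => h; first by exfalso; apply: hn; exists j.
    move: h; case: (w j) => k /=; lia.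
  have hneg : negm w = 0%MM by apply: pA; rewrite -E hp Aimg0.
  move/eqP: wi; apply; rewrite -(dv_posneg w i) /dv hp hneg !mnm0E //.
apply: NNPP => hn.
have hneg : negm w = 0%MM.
  apply/mnmP => j; rewrite mnmE mnm0E /npz.
  case: (ltrP (w j) 0) => h; first by exfalso; apply: hn; exists j.
  by [].
have hp : posm w = 0%MM by apply: pA; rewrite E hneg Aimg0.
move/eqP: wi; apply; rewrite -(dv_posneg w i) /dv hp hneg !mnm0E //.
Qed.

Lemma gen0 (B : 'I_0 -> P) f : gen_ideal B f <-> f = 0.
Proof.
split=> [[r ->]|->]; first by rewrite big_ord0.
by exists (fun _ => 0); rewrite big_ord0.
Qed.

Lemma gen1 (B : 'I_1 -> P) f : gen_ideal B f <-> exists q, f = q * B ord0.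
Proof.
split=> [[r ->]|[q ->]]; first by exists (r ord0); rewrite big_ord1.
by exists (fun _ => q); rewrite big_ord1.
Qed.

Lemma gen2 (B : 'I_2 -> P) f :
  gen_ideal B f <-> exists q0 q1, f = q0 * B ord0 + q1 * B ord_max.
Proof.
split=> [[r ->]|[q0 [q1 ->]]].
  have E : lift ord0 ord0 = ord_max :> 'I_2 by apply/val_inj.
  by exists (r ord0), (r ord_max); rewrite big_ord_recl big_ord1 E.
have E : lift ord0 ord0 = ord_max :> 'I_2 by apply/val_inj.
exists (fun i => if i == ord0 then q0 else q1).
by rewrite big_ord_recl big_ord1 E /=.
Qed.

Lemma rad_eq (J J' : pset K n) : pset_eq J J' -> pset_eq (radical J) (radical J').
Proof. by move=> E f; split=> [[k /E h]|[k /E h]]; exists k. Qed.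

End Tor.


Lemma conv_lam n (lam : 'I_n -> nat) (a b : 'X_{1..n}) :
  (\sum_i lam i * a i = \sum_i lam i * b i)%N <-> \sum_i (lam i)%:Z * dv a b i = 0.
Proof.
have E x : ((\sum_i lam i * x i)%N : int) = \sum_i (lam i)%:Z * (x i)%:Z.
  by rewrite -natz natr_sum; apply: eq_bigr => i _; rewrite natz PoszM.
have E2 : \sum_i (lam i)%:Z * dv a b i =
          ((\sum_i lam i * a i)%N : int) - ((\sum_i lam i * b i)%N : int).
  by rewrite !E -sumrB; apply: eq_bigr => i _; rewrite /dv mulrBr.
rewrite E2; split=> [->|/eqP]; first by rewrite subrr.
by rewrite subr_eq0 => /eqP [].
Qed.

Section Main.
Variables (K : fieldType) (n m : nat) (A : 'I_n -> 'I_m -> int).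
Hypothesis pA : positive_conf A.
Hypothesis hH : height (toric (K := K) A) 2.
Notation P := {mpoly K[n]}.
Notation I := (toric (K := K) A).

Lemma I_ideal : is_ideal I. Proof. exact: toric_ideal. Qed.
Lemma I_prime : is_prime_ideal I. Proof. exact: toric_prime. Qed.

Lemma I_not_zero : ~ pset_eq I (fun f => f = 0).
Proof.
move=> E; case: hH => _ all2; apply: (no_chain2_zero E).
by apply: all2; [exact: I_prime | by []].
Qed.

Lemma not_bar0 : ~ bar_at I 0.
Proof.
move=> [B [_ E]]; apply: I_not_zero => f; split.
  move/E => [k /gen0 /eqP]; rewrite expf_eq0 => /andP [_ /eqP //].
by move=> ->; case: I_ideal.
Qed.

Lemma not_bar1 : ~ bar_at I 1.
Proof.
move=> [B [HB E]]; have [[u [v Bu]] IB] := HB ord0.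
case: (eqVneq u v) => [uv|uv].
  apply: I_not_zero => f; split; last by move=> ->; case: I_ideal.
  move/E => [k /gen1 [q]]; rewrite Bu uv subrr mulr0 => /eqP.
  by rewrite expf_eq0 => /andP [_ /eqP].
pose w := dv u v.
have kw : kerv A w by apply/Aimg_eq/(toric_bin K); rewrite -Bu.
have [i wi] : exists i, w i != 0.
  apply: NNPP => H; move/eqP: uv; apply; apply/mnmP => i.
  have : w i = 0 by apply: NNPP => h; apply: H; exists i; apply/eqP.
  rewrite /w /dv; lia.
have [[i0 wi0] [k wk]] := mixed_sign pA kw wi.
have Hmin : forall v', kerv A v' -> forall j, v' j * w i0 = v' i0 * w j.
  move=> v' kv'; apply: (minors_of_lam wi0 (ex_intro _ k wk)) => lam hlam.
  have : I (bin K v') by apply/toric_binv.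
  move/E => [k' /gen1 [q Hq]]; rewrite Bu in Hq.
  have := eval_bin Hq (proj2 (conv_lam lam u v) hlam).
  move/conv_lam => h; rewrite -[RHS]h; apply: eq_bigr => l _; by rewrite dv_posneg.
have wi0' : w i0 != 0 by rewrite gt_eqF.
have [g [kg [gi0 Hg]]] := ker_cyclic kw wi0' Hmin.
have EP := toric_principal (K := K) kg Hg.
apply: (no_chain2_principal EP (bin_msize K gi0)).
case: hH => _ all2; by apply: all2; [exact: I_prime | by []].
Qed.


Lemma split_part m1 (A1 : 'I_n -> 'I_m1 -> int) :
  psubset (toric (K := K) A1) I -> ~ pset_eq (toric (K := K) A1) I ->
  exists p : P, Defs.binomial p /\ toric A1 p /\
    pset_eq (toric (K := K) A1) (fun f => exists q, f = q * p).
Proof.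
move=> sub neq.
have nsub : ~ psubset I (toric (K := K) A1).
  by move=> h; apply: neq => f; split; [apply: sub | apply: h].
have kersub v : kerv A1 v -> kerv A v.
  by move=> kv; apply/(toric_binv K); apply: sub; apply/toric_binv.
case: (classic (forall v, kerv A1 v -> forall i, v i = 0)) => [h0|hn].
  exists 0; split; first by exists 0%MM, 0%MM; rewrite subrr.
  split; first by case: (toric_ideal K A1).
  move=> f; rewrite (toric_zero (K := K) h0 f); split=> [->|[q ->]]; last by rewrite mulr0.
  by exists 0; rewrite mulr0.
have [w [kw1 [i0 wi0]]] : exists w, kerv A1 w /\ exists i0, w i0 != 0.
  apply: NNPP => H; apply: hn => v kv i; apply: NNPP => vi; apply: H.
  by exists v; split => //; exists i; apply/eqP.
have Hmin : forall v, kerv A1 v -> forall j, v j * w i0 = v i0 * w j.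
  move=> v kv; apply: NNPP => hv.
  have [j hj] : exists j, v j * w i0 <> v i0 * w j.
    by apply: NNPP => H; apply: hv => j; apply: NNPP => hj; apply: H; exists j.
  case: hH => [[Q [pQ [IQ nQ]]] _]; apply: nQ; apply: (chain_extend _ pQ IQ).
  pose T := toric (K := K) (Mw w i0).
  have TA1 : psubset T (toric (K := K) A1).
    by apply: toric_sub; apply: Mw_sub_ker.
  have Tw : T (bin K w).
    by apply/toric_binv; apply/kerv_Mw => l; rewrite mulrC.
  have wnz : bin K w != 0.
    by apply: contraTneq (bin_msize K wi0) => ->; rewrite mmeasure0.
  exists (fun i => if i == 0%N then (fun f : P => f = 0) else if i == 1%N then T
           else if i == 2%N then toric (K := K) A1 else I).
  split; [|split].
  - case=> [|[|[|i]]] _ /=; [exact: zero_prime | exact: toric_prime | exact: toric_prime | ].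
    exact: I_prime.
  - case=> [|[|[|i]]] //= _.
    + split; first by move=> f ->; case: (toric_ideal K (Mw w i0)).
      by move=> h; move/eqP: wnz; apply; apply: h.
    + split=> [|h]; first exact: TA1.
      apply: hj; apply: (proj1 (kerv_Mw w i0 v) _ j); apply/(toric_binv K); apply: h.
      exact/toric_binv.
    + split=> //; exact: sub.
have [g [kg [gi0 Hg]]] := ker_cyclic kw1 wi0 Hmin.
exists (bin K g); split; first by exists (posm g), (negm g).
split; first exact/toric_binv.
exact: toric_principal.
Qed.


Lemma split_bar2 : radical_splittable K A -> bar_at I 2.
Proof.
move=> [m1 [m2 [A1 [A2 [_ [_ [E [n1 n2]]]]]]]].
have sub1 : psubset (toric (K := K) A1) I.
  move=> f h; apply/E; exists 1%N; rewrite expr1; exists f, 0; split => //.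
  by split; [case: (toric_ideal K A2) | rewrite addr0].
have sub2 : psubset (toric (K := K) A2) I.
  move=> f h; apply/E; exists 1%N; rewrite expr1; exists 0, f.
  split; first by case: (toric_ideal K A1).
  by split => //; rewrite add0r.
have [p1 [b1 [t1 E1]]] := split_part sub1 n1.
have [p2 [b2 [t2 E2]]] := split_part sub2 n2.
exists (fun i : 'I_2 => if i == ord0 then p1 else p2); split.
  move=> i; case: (i == ord0).
    by split => //; apply: sub1.
  by split => //; apply: sub2.
move=> f; rewrite (E f); apply: rad_eq => {}f; split.
  move=> [g [h [/E1 [q1 ->] [/E2 [q2 ->] ->]]]].
  by apply/gen2; exists q1, q2.
move/gen2 => [q0 [q1 ->]] /=.
exists (q0 * p1), (q1 * p2); split; first by apply/E1; exists q0.
by split => //; apply/E2; exists q1.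
Qed.

Lemma sum_sel1 (v : 'I_n -> int) (j : 'I_n) :
  \sum_(i < n) v i * (i == j)%:Z = v j.
Proof.
rewrite (bigD1 j) //= eqxx mulr1 big1 ?addr0 // => i /negbTE ->; by rewrite mulr0.
Qed.

Lemma split_bin b : Defs.binomial b -> I b ->
  exists m1 (A1 : 'I_n -> 'I_m1 -> int), positive_conf A1 /\
    psubset (toric (K := K) A1) I /\ toric (K := K) A1 b /\
    ~ pset_eq (toric (K := K) A1) I.
Proof.
move=> [u [v ->]] Ib.
case: (eqVneq u v) => [<-|uv].
  pose Id := fun i j : 'I_n => (i == j)%:Z.
  have kId w : kerv Id w -> forall i, w i = 0.
    by move=> kw i; rewrite -(sum_sel1 w i); apply: kw.
  exists n, Id; split.
    move=> x hx; apply/mnmP => i; rewrite mnm0E.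
    have : Aimg Id x = Aimg Id 0%MM by rewrite hx Aimg0.
    move/Aimg_eq => /kId /(_ i); rewrite /dv mnm0E; lia.
  split.
    apply: toric_sub => w /kId hw j; rewrite big1 // => i _; by rewrite hw mul0r.
  split; first by rewrite subrr; case: (toric_ideal K Id).
  move=> ET; apply: I_not_zero => f; rewrite -(ET f); exact: toric_zero.
pose w := dv u v.
have kw : kerv A w by apply/Aimg_eq/(toric_bin K).
have [i wi] : exists i, w i != 0.
  apply: NNPP => H; move/eqP: uv; apply; apply/mnmP => i.
  have : w i = 0 by apply: NNPP => h; apply: H; exists i; apply/eqP.
  rewrite /w /dv; lia.
have [hp hn] := mixed_sign pA kw wi.
exists n, (Mw w i); split; first exact: Mw_pos.
split; first by apply: toric_sub; apply: Mw_sub_ker.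
split; first by apply/(toric_bin K)/Aimg_eq/kerv_Mw => l; rewrite mulrC.
move=> ET.
have Hmin : forall v', kerv A v' -> forall j, v' j * w i = v' i * w j.
  move=> v' kv'; apply/kerv_Mw; apply/(toric_binv K); apply/ET; exact/toric_binv.
have [g [kg [gi0 Hg]]] := ker_cyclic kw wi Hmin.
have EP := toric_principal (K := K) kg Hg.
apply: not_bar1; exists (fun _ => bin K g); split.
  move=> _; split; first by exists (posm g), (negm g).
  exact/toric_binv.
move=> f; split.
  by move/EP => [q ->]; exists 1%N; rewrite expr1; apply/gen1; exists q.
move=> [k /gen1 [q Hq]]; apply: (prime_pow (k := k) I_prime); rewrite Hq.
by case: I_ideal => [_ [_ HM]]; apply: HM; apply/toric_binv.
Qed.

Lemma bar2_split : bar_at I 2 -> radical_splittable K A.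
Proof.
move=> [B [HB E]].
have [b0 i0] := HB ord0; have [b1 i1] := HB ord_max.
have [m1 [A1 [p1 [s1 [t1 n1]]]]] := split_bin b0 i0.
have [m2 [A2 [p2 [s2 [t2 n2]]]]] := split_bin b1 i1.
exists m1, m2, A1, A2; split => //; split => //; split => //.
move=> f; split.
  move/E => [k /gen2 [q0 [q1 Hf]]]; exists k; exists (q0 * B ord0), (q1 * B ord_max).
  split; first by case: (toric_ideal K A1) => [_ [_ HM]]; apply: HM.
  by split => //; case: (toric_ideal K A2) => [_ [_ HM]]; apply: HM.
move=> [k [g [h [Tg [Th Hf]]]]]; apply: (prime_pow (k := k) I_prime); rewrite Hf.
by case: I_ideal => [_ [HD _]]; apply: HD; [apply: s1 | apply: s2].
Qed.

End Main.

Local Close Scope ring_scope.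
Unset Implicit Arguments.

Theorem corollary4p2 (K : fieldType) (n m : nat) (A : 'I_n -> 'I_m -> int) :
  positive_conf A ->
  height (toric (K := K) A) 2 ->
  (radical_splittable K A <-> stci_binomials (toric (K := K) A)).
Proof.
move=> pA hH; split.
  move=> hs; exists 2%N; split => //; split; first exact: split_bar2.
  by case=> [|[|t']] // _; [exact: not_bar0 | exact: not_bar1].
move=> [h [hh [hb _]]].
have h2 := height_uniq hH hh; subst h.
exact: bar2_split.
Qed.
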